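(* For all integers $0\le s\le r$, $$\sum_{\rho=s}^{r}\mathcal G^r_\rho\,a^{(2\rho)}_s=(2r)!\binom rs,\qquad \sum_{\rho=s}^{r}\mathcal G^r_\rho\,a^{(2\rho+1)}_s=(2r+1)!\binom rs .$$
   Context: The integers $\mathcal G^r_\rho$ ($0\le\rho\le r$) are defined by $\mathcal G^0_0=1$, $\mathcal G^r_{-1}=\mathcal G^r_{r+1}=0$, and $\mathcal G^r_\rho=(2r-1)^2\mathcal G^{r-1}_\rho+\mathcal G^{r-1}_{\rho-1}$ for $r\ge1$. Stern's coefficients $a^{(n)}_k$ are the unique numbers such that, for all integers $\rho\ge0$ and real $x$, $\frac{d^{2\rho}}{dx^{2\rho}}\operatorname{sech}x=(-1)^\rho\operatorname{sech}x\sum_{k=0}^{\rho}(-1)^k a^{(2\rho)}_k\tanh^{2k}x$ and $\frac{d^{2\rho+1}}{dx^{2\rho+1}}\operatorname{sech}x=(-1)^{\rho+1}\operatorname{sech}x\,\tanh x\sum_{k=0}^{\rho}(-1)^k a^{(2\rho+1)}_k\tanh^{2k}x$. *)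

(* Defs.v *)
From Stdlib Require Import Reals.
Open Scope R_scope.

(* G^0_0 = 1, G^0_rho = 0 otherwise
   (this encodes G^r_{r+1} = 0), and for r >= 1 (written r = S r'):
   G^{r}_rho = (2r-1)^2 G^{r-1}_rho + G^{r-1}_{rho-1}, with G^{r-1}_{-1} = 0. *)
Fixpoint G (r rho : nat) : nat :=
  match r with
  | O => match rho with O => 1%nat | S _ => 0%nat end
  | S r' => match rho with
            | O => ((2 * r' + 1) * (2 * r' + 1) * G r' O)%nat
            | S rho' => ((2 * r' + 1) * (2 * r' + 1) * G r' (S rho') + G r' rho')%nat
            end
  end.

Definition sech (x : R) : R := / cosh x.

Fixpoint nth_deriv (n : nat) (f g : R -> R) : Prop :=
  match n with
  | O => forall x, g x = f x
  | S m => exists h : R -> R, nth_deriv m f h /\ forall x, derivable_pt_lim h x (g x)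
  end.

(* a : nat -> nat -> R satisfies Stern's defining identities: a n k = a^{(n)}_k. *)
Definition stern_coeffs (a : nat -> nat -> R) : Prop :=
  forall rho : nat,
    nth_deriv (2 * rho) sech
      (fun x => (-1) ^ rho * sech x *
         sum_f_R0 (fun k => (-1) ^ k * a (2 * rho)%nat k * tanh x ^ (2 * k)) rho)
    /\
    nth_deriv (2 * rho + 1) sech
      (fun x => (-1) ^ (rho + 1) * sech x * tanh x *
         sum_f_R0 (fun k => (-1) ^ k * a (2 * rho + 1)%nat k * tanh x ^ (2 * k)) rho).

(* Main.v *)
Require Import Defs.
From Stdlib Require Import Reals Lra FunctionalExtensionality.
Open Scope R_scope.

Lemma dmul f g x df dg : derivable_pt_lim f x df -> derivable_pt_lim g x dg ->
  derivable_pt_lim (fun y => f y * g y) x (df * g x + f x * dg).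
Proof. intros; apply (derivable_pt_lim_mult f g x df dg); auto. Qed.
Lemma dplus f g x df dg : derivable_pt_lim f x df -> derivable_pt_lim g x dg ->
  derivable_pt_lim (fun y => f y + g y) x (df + dg).
Proof. intros; apply (derivable_pt_lim_plus f g x df dg); auto. Qed.
Lemma dconst c x : derivable_pt_lim (fun _ => c) x 0.
Proof. apply (derivable_pt_lim_const c x). Qed.
Lemma deq f x l1 l2 : derivable_pt_lim f x l1 -> l1 = l2 -> derivable_pt_lim f x l2.
Proof. intros H ->; exact H. Qed.

Lemma cosh_pos x : 0 < cosh x.
Proof. unfold cosh. pose proof (exp_pos x); pose proof (exp_pos (-x)); lra. Qed.

Lemma cosh_sinh x : cosh x ^ 2 - sinh x ^ 2 = 1.
Proof. unfold cosh, sinh. assert (H : exp x * exp (-x) = 1).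
  { rewrite <- exp_plus. replace (x + - x) with 0 by ring. apply exp_0. }
  nra. Qed.

Lemma sech_deriv x : derivable_pt_lim sech x (- sech x * tanh x).
Proof.
  pose proof (cosh_pos x).
  assert (E : sech = (fun y => 1 / cosh y)).
  { apply functional_extensionality; intro y; unfold sech; field.
    pose proof (cosh_pos y); lra. }
  rewrite E. eapply deq.
  - apply (derivable_pt_lim_div (fun _ => 1) cosh x 0 (sinh x)).
    apply dconst. apply derivable_pt_lim_cosh. lra.
  - unfold sech, tanh, Rsqr. field. lra.
Qed.

Lemma tanh_deriv x : derivable_pt_lim tanh x (1 - tanh x ^ 2).
Proof.
  pose proof (cosh_pos x). pose proof (cosh_sinh x).
  eapply deq.
  - apply (derivable_pt_lim_div sinh cosh x (cosh x) (sinh x)).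
    apply derivable_pt_lim_sinh. apply derivable_pt_lim_cosh. lra.
  - unfold tanh, Rsqr. field_simplify_eq; [nra | lra].
Qed.

Lemma sech_neq0 x : sech x <> 0.
Proof. unfold sech. pose proof (cosh_pos x). apply Rinv_neq_0_compat. lra. Qed.

Lemma tanh_surj y : -1 < y < 1 -> exists x, tanh x = y.
Proof.
  intros Hy. exists (ln ((1 + y) / (1 - y)) / 2).
  set (z := ln ((1 + y) / (1 - y)) / 2).
  assert (Hz : exp z * exp z = (1 + y) / (1 - y)).
  { rewrite <- exp_plus. replace (z + z) with (ln ((1 + y) / (1 - y))) by (unfold z; field).
    apply exp_ln. apply Rdiv_lt_0_compat; lra. }
  assert (Hm : exp (- z) = / exp z) by apply exp_Ropp.
  pose proof (exp_pos z).
  unfold tanh, sinh, cosh. rewrite Hm.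
  assert (Hz2 : exp z * exp z * (1 - y) = 1 + y).
  { rewrite Hz. field. lra. }
  apply (Rmult_eq_reg_r (exp z * exp z + 1)); [|nra].
  field_simplify; [nra|nra..].
Qed.

Lemma nth_deriv_uniq n f g1 g2 : nth_deriv n f g1 -> nth_deriv n f g2 -> forall x, g1 x = g2 x.
Proof.
  revert g1 g2; induction n as [|n IH]; simpl; intros g1 g2 H1 H2 x.
  - rewrite H1, H2; reflexivity.
  - destruct H1 as [h1 [Hh1 D1]]. destruct H2 as [h2 [Hh2 D2]].
    assert (E : h1 = h2) by (apply functional_extensionality; apply IH; assumption).
    subst h2. exact (uniqueness_limite h1 x _ _ (D1 x) (D2 x)).
Qed.

From mathcomp Require Import all_boot all_order all_algebra.
From mathcomp Require Import Rstruct ring lra.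
Import Order.TTheory GRing.Theory Num.Theory.

Section M.
Local Open Scope ring_scope.

Lemma dmulM f g x df dg : derivable_pt_lim f x df -> derivable_pt_lim g x dg ->
  derivable_pt_lim (fun y => f y * g y) x (df * g x + f x * dg).
Proof. exact: dmul. Qed.
Lemma dplusM f g x df dg : derivable_pt_lim f x df -> derivable_pt_lim g x dg ->
  derivable_pt_lim (fun y => f y + g y) x (df + dg).
Proof. exact: dplus. Qed.
Lemma dconstM (c x : R) : derivable_pt_lim (fun _ => c) x 0.
Proof. exact: dconst. Qed.
Lemma sech_derivM x : derivable_pt_lim sech x (- (sech x * tanh x)).
Proof. apply: deq; first exact: sech_deriv. by rewrite RmultE RoppE mulNr. Qed.
Lemma tanh_derivM x : derivable_pt_lim tanh x (1 - tanh x ^+ 2).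
Proof. apply: deq; first exact: tanh_deriv. by rewrite RpowE. Qed.

Lemma horner_deriv (p : {poly R}) x :
  derivable_pt_lim (fun y => p.[tanh y]) x ((p^`()).[tanh x] * (1 - tanh x ^+ 2)).
Proof.
  elim/poly_ind: p => [|p c IH].
  - have -> : (fun y => (0 : {poly R}).[tanh y]) = fun _ => 0.
      by apply functional_extensionality => y; rewrite horner0.
    apply: deq; first exact: dconstM. by rewrite deriv0 horner0 mul0r.
  - have -> : (fun y => (p * 'X + c%:P).[tanh y]) = fun y => p.[tanh y] * tanh y + c.
      by apply functional_extensionality => y; rewrite hornerMXaddC.
    apply: deq; first by apply: dplusM; [apply: dmulM; [apply: IH|apply: tanh_derivM]|apply: dconstM].
    rewrite derivMXaddC hornerD hornerMX. ring.
Qed.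

Lemma LawE (a b : R) : @SemiGroup.Law.sort _ (GRing.GRing_mul__canonical__SemiGroup_Law _) a b = a * b.
Proof. by []. Qed.

Definition Dop (p : {poly R}) : {poly R} := - ('X * p) + (1 - 'X^2) * p^`().

Lemma f_deriv (p : {poly R}) x :
  derivable_pt_lim (fun y => sech y * p.[tanh y]) x (sech x * (Dop p).[tanh x]).
Proof.
  apply: deq; first by apply: dmulM; [apply: sech_derivM|apply: horner_deriv].
  move: (tanh x) (sech x) => t s. rewrite /Dop !(hornerD, hornerN, hornerM, hornerX, hornerC, hornerXn, hornerE). rewrite !LawE. ring.
Qed.

Fixpoint pp (n : nat) : {poly R} := match n with O => 1 | S m => Dop (pp m) end.

Lemma pp_deriv n : nth_deriv n sech (fun x => sech x * (pp n).[tanh x]).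
Proof.
  elim: n => [|n IH] /=.
  - move=> x. by rewrite hornerE mulr1.
  - exists (fun x => sech x * (pp n).[tanh x]); split; [exact IH|].
    move=> x; apply f_deriv.
Qed.
End M.

Section M.
Local Open Scope ring_scope.

Lemma poly_eq_on (p q : {poly R}) :
  (forall t : R, 0 <= t -> t < 1 -> p.[t] = q.[t]) -> p = q.
Proof.
  move=> H; apply/eqP; rewrite -subr_eq0; apply/negPn/negP => Hd.
  set d := p - q in Hd.
  set N := size d.
  have N0 : (0 < N)%N by rewrite lt0n size_poly_eq0.
  have N0R : (0 : R) < N%:R by rewrite ltr0n.
  pose rs : seq R := [seq i%:R / N%:R | i <- iota 0 N].
  have Hall : all (root d) rs.
    apply/allP => y /mapP [i Hi ->]. rewrite mem_iota add0n in Hi.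
    rewrite /root /d hornerD hornerN H ?subrr //.
    + by rewrite divr_ge0 ?ler0n // ltW.
    + by rewrite ltr_pdivrMr // mul1r ltr_nat; case/andP: Hi.
  have Hu : uniq rs.
    rewrite map_inj_uniq ?iota_uniq // => i j E.
    apply/eqP; rewrite -(eqr_nat R); apply/eqP; apply: (mulIf _ E).
    by rewrite invr_eq0 gt_eqF.
  have := max_poly_roots Hd Hall Hu.
  by rewrite size_map size_iota ltnn.
Qed.

Lemma sum_f_big (f : nat -> R) n : sum_f_R0 f n = \sum_(k < n.+1) f k.
Proof.
  elim: n => [|n IH] /=; first by rewrite big_ord_recl big_ord0 addr0.
  by rewrite IH [in RHS]big_ord_recr.
Qed.

End M.

Section N.
Local Open Scope ring_scope.

Definition qe (a : nat -> nat -> R) rho : {poly R} :=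
  \sum_(k < rho.+1) ((-1)^+rho * ((-1)^+k * a (Nat.mul 2 rho) k)) *: 'X^(2*k).
Definition qo (a : nat -> nat -> R) rho : {poly R} :=
  \sum_(k < rho.+1) ((-1)^+(Nat.add rho 1) * ((-1)^+k * a (Nat.add (Nat.mul 2 rho) 1) k)) *: 'X^(2*k+1).

Lemma tanh_surjM (t : R) : 0 <= t -> t < 1 -> exists x, tanh x = t.
Proof.
  move=> /RleP t0 /RltP t1. apply: tanh_surj. split; last exact t1.
  apply: (Rlt_le_trans _ 0) => //. apply/RltP. by rewrite ltrN10.
Qed.

Lemma sum_pow_conv (a : nat -> nat -> R) n rho t :
  sum_f_R0 (fun k => Rmult (Rmult (pow (-1) k) (a n k)) (pow t (2 * k))) rho
  = \sum_(k < rho.+1) (-1)^+k * a n k * t^+(2*k).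
Proof. rewrite sum_f_big; apply: eq_bigr => k _. by rewrite !RpowE. Qed.

Lemma pp_even a (Ha : stern_coeffs a) rho : pp (2*rho) = qe a rho.
Proof.
  apply: poly_eq_on => t t0 t1.
  have [x Hx] := tanh_surjM _ t0 t1.
  have U := nth_deriv_uniq _ _ _ _ (pp_deriv (2*rho)) (proj1 (Ha rho)) x.
  move: U; rewrite Hx sum_pow_conv.
  have Hs := sech_neq0 x. move: (sech x) Hs => s Hs.
  rewrite RmultE RmultE RpowE => U.
  have Hs' : s != 0 by apply/eqP.
  apply: (mulrI (x := s)); first by rewrite unitfE.
  rewrite U /qe horner_sum (mulrC _ s) -mulrA !mulr_sumr. apply: eq_bigr => k _.
  rewrite hornerZ hornerXn. ring.
Qed.

Lemma pp_odd a (Ha : stern_coeffs a) rho : pp (2*rho+1) = qo a rho.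
Proof.
  apply: poly_eq_on => t t0 t1.
  have [x Hx] := tanh_surjM _ t0 t1.
  have U := nth_deriv_uniq _ _ _ _ (pp_deriv (2*rho+1)) (proj2 (Ha rho)) x.
  move: U; rewrite Hx sum_pow_conv.
  have Hs := sech_neq0 x. move: (sech x) Hs => s Hs.
  rewrite !RmultE RpowE => U.
  have Hs' : s != 0 by apply/eqP.
  apply: (mulrI (x := s)); first by rewrite unitfE.
  rewrite U /qo horner_sum !mulr_sumr. apply: eq_bigr => k _.
  rewrite hornerZ hornerXn addn1 exprS. ring.
Qed.
End N.

Lemma G_out r rho : (r < rho)%N -> G r rho = 0%N.
Proof.
  elim: r rho => [|r IH] [|rho] //= H.
  rewrite !IH //; last by apply: ltnW. by rewrite Nat.mul_0_r.
Qed.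

Lemma G_S0 r : G r.+1 0 = ((2*r+1)*(2*r+1)*G r 0)%N.
Proof. by []. Qed.
Lemma G_SS r rho : G r.+1 rho.+1 = ((2*r+1)*(2*r+1)*G r rho.+1 + G r rho)%N.
Proof. by []. Qed.

Section M.
Local Open Scope ring_scope.

Definition W : {poly R} := 1 - 'X^2.

Lemma Dop_add p q : Dop (p + q) = Dop p + Dop q.
Proof. rewrite /Dop derivD. ring. Qed.
Lemma Dop_0 : Dop 0 = 0.
Proof. rewrite /Dop deriv0. ring. Qed.
Lemma Dop_scale (c : R) p : Dop (c *: p) = c *: Dop p.
Proof. rewrite /Dop derivZ -!mul_polyC. ring. Qed.

Lemma Dop_N p : Dop (- p) = - Dop p.
Proof. rewrite /Dop derivN. ring. Qed.
Lemma Dop_natl (n : nat) p : Dop (n%:R * p) = n%:R * Dop p.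
Proof. rewrite /Dop mulr_natl derivMn -mulr_natl. ring. Qed.

Lemma Dop_sum n (F : 'I_n -> {poly R}) : Dop (\sum_(i < n) F i) = \sum_(i < n) Dop (F i).
Proof. exact: (big_morph Dop Dop_add Dop_0). Qed.

Lemma W_deriv r : W * (W ^+ r)^`() = - ((2 * r)%:R * ('X * W ^+ r)).
Proof.
  have d1 : (1 : {poly R})^`() = 0 by rewrite -polyC1 derivC.
  elim: r => [|r IH]; first by rewrite expr0 d1 mulr0 muln0 mul0r oppr0.
  rewrite exprS derivM.
  have -> : W^`() = - (2%:R * 'X) by rewrite /W derivB d1 derivXn expr1 sub0r mulr_natl.
  have E : W * (- (2%:R * 'X) * W ^+ r + W * (W ^+ r)^`()) = - (2%:R * 'X) * W * W^+r + W * (W * (W ^+ r)^`()) by ring.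
  rewrite E IH natrM natrM mulrS. ring.
Qed.

Lemma Dop_W r : Dop (W ^+ r) = - ((2 * r + 1)%:R * ('X * W ^+ r)).
Proof.
  rewrite /Dop -/W.
  rewrite W_deriv natrD natrM. ring.
Qed.

Lemma Dop_XW r : Dop ('X * W ^+ r) = W ^+ r.+1 - ((2 * r + 1)%:R * ('X^2 * W ^+ r)).
Proof.
  rewrite /Dop -/W.
  rewrite derivM derivX mulrDr (mulrCA W 'X) W_deriv natrD natrM exprS. ring.
Qed.
End M.

Section E.
Local Open Scope ring_scope.

Definition F r rho := (G r rho)%:R * (- GRing.one R)^+rho.
Definition E r : {poly R} := \sum_(rho < r.+1) F r rho *: pp (2*rho)%N.
Definition O r : {poly R} := \sum_(rho < r.+1) F r rho *: pp (2*rho)%N.+1.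

Lemma O_E r : O r = Dop (E r).
Proof.
  rewrite /E Dop_sum. apply: eq_bigr => i _. by rewrite Dop_scale.
Qed.

Lemma pp_SS i : pp (2 * i.+1)%N = Dop (Dop (pp (2 * i)%N)).
Proof. by rewrite mulnS add2n. Qed.

Lemma E_S r : E r.+1 = ((2*r+1)*(2*r+1))%:R *: E r - Dop (Dop (E r)).
Proof.
  set k := GRing.natmul (GRing.one R) ((2*r+1)*(2*r+1)).
  have FS0 : F r.+1 0 = k * F r 0 by rewrite /F G_S0 natrM /k mulrA.
  have FSS : forall i, F r.+1 i.+1 = k * F r i.+1 - F r i.
    move=> i; rewrite /F G_SS natrD natrM -/k exprS. ring.
  have Fr : F r r.+1 = 0 by rewrite /F G_out // mul0r.
  rewrite {1}/E big_ord_recl FS0.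
  under eq_bigr => i _ do rewrite lift0 FSS scalerBl.
  rewrite sumrB.
  have -> : \sum_(i < r.+1) (k * F r i.+1) *: pp (2 * i.+1)%N
          = k *: \sum_(i < r) F r i.+1 *: pp (2 * i.+1)%N.
    rewrite big_ord_recr Fr mulr0 scale0r Monoid.mulm1 scaler_sumr.
    apply: eq_bigr => i _. by rewrite scalerA.
  have -> : \sum_(i < r.+1) F r i *: pp (2 * i.+1)%N = Dop (Dop (E r)).
    rewrite /E !Dop_sum. apply: eq_bigr => i _. by rewrite !Dop_scale pp_SS.
  rewrite /E big_ord_recl scalerDr scalerA.
  under [in RHS]eq_bigr => i _ do rewrite lift0.
  by rewrite addrA.
Qed.

Lemma E_val r : E r = (2*r)`!%:R *: W ^+ r.
Proof.
  elim: r => [|r IH].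
  - by rewrite /E big_ord1 /F /= expr0 mulr1 !scale1r.
  - rewrite E_S IH !Dop_scale Dop_W.
    rewrite Dop_N Dop_natl Dop_XW.
    have -> : (2 * r.+1)`! = ((2*r)`! * (2*r+1) * (2*r+2))%N.
      by rewrite mulnS add2n !factS addn1 addn2; ring.
    rewrite -!mul_polyC !polyC_natr exprS /W.
    ring.
Qed.
End E.

Section F.
Local Open Scope ring_scope.

Lemma coef_sum_sel (c : nat -> R) n j (f : nat -> nat) :
  injective f ->
  (\sum_(k < n) c k *: 'X^(f k))`_(f j) = if (j < n)%N then c j else 0.
Proof.
  move=> fI. rewrite coef_sum.
  under eq_bigr => k _ do rewrite coefZ coefXn (inj_eq fI).
  case: ifP => hj.
  - rewrite (bigD1 (Ordinal hj)) //= eqxx mulr1 big1 ?addr0 // => k.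
    rewrite -val_eqE /= eq_sym => /negbTE ->. by rewrite mulr0.
  - rewrite big1 // => k _. case: eqP => [E|]; last by rewrite mulr0.
    by move: (ltn_ord k); rewrite -E hj.
Qed.

Lemma W_exp r : W ^+ r = \sum_(k < r.+1) ((-1)^+k * 'C(r, k)%:R) *: 'X^(2*k).
Proof.
  rewrite /W exprDn. apply: eq_bigr => k _.
  rewrite expr1n mul1r [in LHS]exprNn exprM -mul_polyC polyCM polyC_exp polyCN polyC1 polyC_natr.
  rewrite -mulr_natr. ring.
Qed.

Lemma O_val r : O r = - ((2*r+1)`!%:R *: ('X * W ^+ r)).
Proof.
  rewrite O_E E_val Dop_scale Dop_W.
  rewrite addn1 factS -!mul_polyC !polyC_natr natrM. ring.
Qed.

End F.

Section G.
Local Open Scope ring_scope.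

Lemma coef_even (c : nat -> R) n j :
  (\sum_(k < n) c k *: 'X^(2*k))`_(2*j) = if (j < n)%N then c j else 0.
Proof. by apply: (coef_sum_sel c n j (fun k => 2*k)%N) => x y /eqP; rewrite eqn_mul2l /= => /eqP. Qed.

Lemma coef_odd (c : nat -> R) n j :
  (\sum_(k < n) c k *: 'X^(2*k+1))`_(2*j+1) = if (j < n)%N then c j else 0.
Proof. by apply: (coef_sum_sel c n j (fun k => 2*k+1)%N) => x y /eqP; rewrite eqn_add2r eqn_mul2l /= => /eqP. Qed.

Lemma shift_sum (g : nat -> R) r s : (s <= r)%N ->
  \sum_(rho < r.+1) (if (s < rho.+1)%N then g rho else 0) = \sum_(i < (r-s).+1) g (i + s)%N.
Proof.
  move=> hs.
  rewrite -(big_mkord xpredT (fun rho => if (s < rho.+1)%N then g rho else 0)) (big_cat_nat _ (n:=s)) //=; last by apply: leqW.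
  rewrite big1_seq ?add0r; last first.
    move=> i /andP [_]; rewrite mem_index_iota => /andP [_ hi]. by rewrite ltnS leqNgt hi.
  rewrite -{1}(add0n s) big_addn subSn // -(big_mkord xpredT (fun i => g (i + s)%N)) big_nat_cond [in RHS]big_nat_cond. apply: eq_bigr => i _.
  by rewrite ltnS leq_addl.
Qed.

Lemma sign_sq (k : nat) : (-1 : R)^+k * (-1)^+k = 1.
Proof. by rewrite -exprMn mulrNN mulr1 expr1n. Qed.

Lemma even_ident a (Ha : stern_coeffs a) r s : (s <= r)%N ->
  \sum_(i < (r-s).+1) (G r (i+s))%:R * a (2*(i+s))%N s = (2*r)`!%:R * 'C(r,s)%:R.
Proof.
  move=> hs.
  have L : (E r)`_(2*s)%N = \sum_(rho < r.+1) (if (s < rho.+1)%N then (-1)^+s * ((G r rho)%:R * a (2*rho)%N s) else 0).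
    rewrite /E coef_sum. apply: eq_bigr => rho _.
    rewrite coefZ (pp_even _ Ha) /qe (coef_even (fun k => (-1) ^+ rho * ((-1) ^+ k * a (Nat.mul 2 rho) k))).
    case: ifP => _; last by rewrite mulr0.
    rewrite /F -mulrA [X in _ * X]mulrA sign_sq mul1r. ring.
  have Rr : ((2*r)`!%:R *: W ^+ r)`_(2*s)%N = (2*r)`!%:R * ((-1)^+s * 'C(r,s)%:R).
    by rewrite coefZ W_exp (coef_even (fun k => (-1)^+k * 'C(r,k)%:R)) ltnS hs.
  have := congr1 (fun p : {poly R} => p`_(2*s)%N) (E_val r).
  rewrite /= L Rr (shift_sum (fun rho => (-1)^+s * ((G r rho)%:R * a (2*rho)%N s))) // -mulr_sumr => E.
  apply: (mulrI (x := (-1)^+s)); first by rewrite unitrX // unitrN unitr1.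
  rewrite E. ring.
Qed.

Lemma odd_ident a (Ha : stern_coeffs a) r s : (s <= r)%N ->
  \sum_(i < (r-s).+1) (G r (i+s))%:R * a (2*(i+s)+1)%N s = (2*r+1)`!%:R * 'C(r,s)%:R.
Proof.
  move=> hs.
  have L : (O r)`_(2*s+1)%N = \sum_(rho < r.+1) (if (s < rho.+1)%N then - ((-1)^+s * ((G r rho)%:R * a (2*rho+1)%N s)) else 0).
    rewrite /O coef_sum. apply: eq_bigr => rho _.
    have -> : ((2 * rho)%N.+1) = (2*rho+1)%N by rewrite addn1.
    rewrite coefZ (pp_odd _ Ha) /qo (coef_odd (fun k => (-1) ^+ (Nat.add rho 1) * ((-1) ^+ k * a (Nat.add (Nat.mul 2 rho) 1) k))).
    case: ifP => _; last by rewrite mulr0.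
    rewrite /F. have -> : Nat.add rho 1 = rho.+1 by rewrite Nat.add_1_r.
    rewrite exprS -signr_odd; case: (odd rho); rewrite ?expr1 ?expr0; ring.
  have Rr : (- ((2*r+1)`!%:R *: ('X * W ^+ r)))`_(2*s+1)%N = - ((2*r+1)`!%:R * ((-1)^+s * 'C(r,s)%:R)).
    rewrite coefN coefZ W_exp mulr_sumr.
    have -> : \sum_(k < r.+1) ('X : {poly R}) * (((-1) ^+ k * 'C(r, k)%:R) *: 'X^(2 * k))
         = \sum_(k < r.+1) (((-1) ^+ k * 'C(r, k)%:R) *: 'X^(2 * k + 1)).
      apply: eq_bigr => k _. by rewrite -scalerAr -exprS addn1.
    by rewrite (coef_odd (fun k => (-1)^+k * 'C(r,k)%:R)) ltnS hs.
  have := congr1 (fun p : {poly R} => p`_(2*s+1)%N) (O_val r).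
  rewrite /= L Rr (shift_sum (fun rho => - ((-1)^+s * ((G r rho)%:R * a (2*rho+1)%N s)))) //.
  rewrite sumrN -mulr_sumr => E.
  apply: (mulrI (x := (-1)^+s)); first by rewrite unitrX // unitrN unitr1.
  have E' := congr1 (fun x => - x) E. rewrite /= !opprK in E'.
  rewrite E'. ring.
Qed.
End G.

Lemma fact_eq n : Factorial.fact n = n`!.
Proof. elim: n => [|n IH] //=. by rewrite factS IH. Qed.

Section Fin.
Local Open Scope ring_scope.
Lemma C_eq r s : (s <= r)%N -> C r s = 'C(r,s)%:R.
Proof.
  move=> hs. rewrite /C RdivE !INRE !fact_eq -(bin_fact hs) !natrM mulfK //.
  by rewrite mulf_neq0 // pnatr_eq0 -lt0n fact_gt0.
Qed.
End Fin.

Open Scope R_scope.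

Theorem mainTheorem3 (a : nat -> nat -> R) (Ha : stern_coeffs a) (r s : nat) (hs : Peano.le s r) :
  sum_f_R0 (fun i => INR (G r (i + s)) * a (2 * (i + s))%nat s) (r - s)
    = INR (Factorial.fact (2 * r)) * C r s
  /\
  sum_f_R0 (fun i => INR (G r (i + s)) * a (2 * (i + s) + 1)%nat s) (r - s)
    = INR (Factorial.fact (2 * r + 1)) * C r s.
Proof.
  have hs' : (s <= r)%N := introT (@ssrnat.leP s r) hs.
  split.
  - rewrite sum_f_big C_eq // INRE fact_eq.
    apply: eq_trans _ (even_ident _ Ha _ _ hs').
    apply: eq_bigr => i _. by rewrite INRE.
  - rewrite sum_f_big C_eq // INRE fact_eq.
    apply: eq_trans _ (odd_ident _ Ha _ _ hs').
    apply: eq_bigr => i _. by rewrite INRE.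
Qed.
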